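(* Let $a, n \in \mathbb{N}$, $d = 2^a$, $\eta = 1/n$, and $j \ge n + a + 1$. Let $L_1 \subset L_2 \subset \dots \subset L_{n+2}$ be a chain of dyadic intervals with $L_i \in \mathcal{D}_{j-a-i+1}$, and for $i = 1, \dots, n+1$ let $P_i = L_{i+1} \setminus L_i$ be the dyadic brother of $L_i$ in $L_{i+1}$. Let $I_1, \dots, I_{d-1} \in \mathcal{D}_j$ be distinct intervals with $I_i \subset L_1$, and let $J_1, \dots, J_{n+1} \in \mathcal{D}_j$ with $J_i \subset P_i$. For $k = 0, \dots, n$ put $$\mathcal{C}(k) = \{I_1, \dots, I_{d-1}\} \cup \{J_{n-k+1}, \dots, J_{n+1}\}.$$ Then the sequence $\mathcal{C}(0) \subset \mathcal{C}(1) \subset \dots \subset \mathcal{C}(n)$ is increasing and: (A) There exists exactly one, up to permutation of the colours, $(\eta,d)$-homogeneous colouring $\mathcal{C}(0) = \mathcal{C}_1(0) \cup \dots \cup \mathcal{C}_d(0)$. (B) For each $1 \le k \le n-1$: given the $(\eta,d)$-homogeneous colouring $\mathcal{C}(k-1) = \mathcal{C}_1(k-1) \cup \dots \cup \mathcal{C}_d(k-1)$ obtained at stage $k-1$, there exists exactly one $(\eta,d)$-homogeneous colouring $\mathcal{C}(k) = \mathcal{C}_1(k) \cup \dots \cup \mathcal{C}_d(k)$ such that $\mathcal{C}_i(k-1) \subset \mathcal{C}_i(k)$ for all $1 \le i \le d$. (C) Given the $(\eta,d)$-homogeneous colouring $\mathcal{C}(n-1) = \mathcal{C}_1(n-1)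 \cup \dots \cup \mathcal{C}_d(n-1)$ obtained at stage $n-1$, there does not exist an $(\eta,d)$-homogeneous colouring $\mathcal{C}(n) = \mathcal{C}_1(n) \cup \dots \cup \mathcal{C}_d(n)$ such that $\mathcal{C}_i(n-1) \subset \mathcal{C}_i(n)$ for all $1 \le i \le d$.
   Context: $\mathcal{D}$ denotes the collection of dyadic subintervals of $[0,1]$ and $\mathcal{D}_m = \{I \in \mathcal{D} : |I| = 2^{-m}\}$. For a collection $\mathcal{A}$ of dyadic intervals and $L \in \mathcal{D}$, write $\mathcal{A} \cap L = \{I \in \mathcal{A} : I \subset L\}$, and $|\mathcal{A}|$ for its cardinality. A colouring of $\mathcal{A}$ with $d$ colours is a decomposition $\mathcal{A} = \mathcal{A}_1 \cup \dots \cup \mathcal{A}_d$ into pairwise disjoint (possibly empty) subcollections. For $\mathcal{A} \subset \mathcal{D}_j$, $d \in \mathbb{N}$ and $\eta > 0$, such a decomposition is called an $(\eta,d)$-homogeneous colouring if for every $L \in \mathcal{D}$ with $|L| \ge 2^{-j}$ one of the following holds: either $|\mathcal{A} \cap L| > d$ and $\eta \max_{1\le i\le d} |\mathcal{A}_i \cap L| \le \min_{1 \le i \le d} |\mathcal{A}_i \cap L|$; or $|\mathcal{A} \cap L| \le d$ and $|\mathcal{A}_i \cap L| \le 1$ for each $1 \le i \le d$. ''Up to permutation'' means up to relabelling the colours $1,\dots,d$. *)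

(* Defs.v *)
From mathcomp Require Import all_boot all_order all_algebra all_fingroup.
Set Implicit Arguments. Unset Strict Implicit. Unset Printing Implicit Defensive.
Import Order.TTheory GRing.Theory Num.Theory.
Local Open Scope ring_scope.

(* A dyadic interval [k 2^-m, (k+1) 2^-m) of [0,1], coded by (m, k). *)
Record dyad := Dyad { dlev : nat; dpos : nat }.

Definition dvalid (I : dyad) : bool := (dpos I < 2 ^ dlev I)%N.

Definition dsub (I L : dyad) : bool :=
  (dlev L <= dlev I)%N && (dpos I %/ 2 ^ (dlev I - dlev L) == dpos L)%N.

Definition dbrother (I : dyad) : dyad :=
  Dyad (dlev I) (if odd (dpos I) then (dpos I).-1 else (dpos I).+1).

(* D_j is identified with 'I_(2^j): x <-> [x 2^-j, (x+1) 2^-j) *)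
Definition dyD (j : nat) (x : 'I_(2 ^ j)) : dyad := Dyad j x.

Definition restr (j : nat) (A : {set 'I_(2 ^ j)}) (L : dyad) : {set 'I_(2 ^ j)} :=
  [set x in A | dsub (dyD x) L].

Definition colouring (j d : nat) (A : {set 'I_(2 ^ j)})
    (C : {ffun 'I_d -> {set 'I_(2 ^ j)}}) : Prop :=
  (forall i i' : 'I_d, i != i' -> [disjoint C i & C i']) /\
  \bigcup_(i < d) C i = A.

(* (eta,d)-homogeneous colouring.  "eta * max_i |A_i ∩ L| <= min_i |A_i ∩ L|"
   is written out as: for all colours i, i', eta * |A_i ∩ L| <= |A_i' ∩ L|. *)
Definition homogeneous (j d : nat) (eta : rat) (A : {set 'I_(2 ^ j)})
    (C : {ffun 'I_d -> {set 'I_(2 ^ j)}}) : Prop :=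
  colouring A C /\
  forall L : dyad, dvalid L -> (dlev L <= j)%N ->
    ((d < #|restr A L|)%N /\
       forall i i' : 'I_d,
         eta * (#|restr (C i) L|)%:R <= (#|restr (C i') L|)%:R)
    \/
    ((#|restr A L| <= d)%N /\ forall i : 'I_d, (#|restr (C i) L| <= 1)%N).

Definition extends (j d : nat) (Y X : {ffun 'I_d -> {set 'I_(2 ^ j)}}) : Prop :=
  forall i : 'I_d, Y i \subset X i.

(* Colourings "obtained at stage k": stage 0 = homogeneous colourings of Cs 0;
   stage k+1 = homogeneous colourings of Cs (k+1) extending a stage-k colouring. *)
Fixpoint stage (j d : nat) (eta : rat) (Cs : nat -> {set 'I_(2 ^ j)}) (k : nat)
    (X : {ffun 'I_d -> {set 'I_(2 ^ j)}}) : Prop :=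
  match k with
  | 0 => homogeneous eta (Cs 0%N) X
  | k'.+1 => homogeneous eta (Cs k'.+1) X /\
             exists Y, stage eta Cs k' Y /\ extends Y X
  end.

(* Main.v *)
Require Import Defs.
From mathcomp Require Import all_boot all_order all_algebra all_fingroup zify.
Import Order.TTheory GRing.Theory Num.Theory.
Local Open Scope ring_scope.
Set Implicit Arguments. Unset Strict Implicit. Unset Printing Implicit Defensive.


Lemma anc_trans (j m m' x : nat) : (m <= m' <= j)%N ->
  (x %/ 2 ^ (j - m) = x %/ 2 ^ (j - m') %/ 2 ^ (m' - m))%N.
Proof.
move=> h; rewrite -divnMA -expnD; congr (_ %/ 2 ^ _)%N; lia.
Qed.

Lemma geom (a n j : nat) (L : nat -> dyad)
    (I : 'I_(2 ^ a).-1 -> 'I_(2 ^ j)) (J : nat -> 'I_(2 ^ j)) :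
  (0 < a)%N -> (0 < n)%N -> (n + a + 1 <= j)%N ->
  (forall i, (1 <= i <= n + 2)%N -> dvalid (L i) /\ dlev (L i) = (j + 1 - a - i)%N) ->
  (forall i, (1 <= i <= n + 1)%N -> dsub (L i) (L i.+1)) ->
  (forall i, dsub (dyD (I i)) (L 1%N)) ->
  (forall i, (1 <= i <= n + 1)%N -> dsub (dyD (J i)) (dbrother (L i))) ->
  [/\ (forall t i', (1 <= i' <= n + 2)%N -> dsub (dyD (I t)) (L i')),
      (forall i i', (1 <= i)%N -> (i < i' <= n + 2)%N -> dsub (dyD (J i)) (L i')),
      (forall i i', (1 <= i' <= i)%N -> (i <= n + 1)%N -> ~~ dsub (dyD (J i)) (L i')) &
      (forall K i1 i2 t, (dlev K <= j)%N -> (1 <= i1)%N -> (i1 < i2 <= n + 1)%N ->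
          dsub (dyD (J i1)) K -> dsub (dyD (J i2)) K -> dsub (dyD (I t)) K)].
Proof.
move=> a0 n0 hj HL Hch HI HJ.
set m := fun i => (j + 1 - a - i)%N.
have lev i : (1 <= i <= n + 2)%N -> dlev (L i) = m i by move=> h; case: (HL i h).
have inL i (x : 'I_(2 ^ j)) : (1 <= i <= n + 2)%N ->
    dsub (dyD x) (L i) = (x %/ 2 ^ (j - m i) == dpos (L i))%N.
  by move=> h; rewrite /dsub lev //= (_ : m i <= j)%N //; rewrite /m; lia.
have chl i : (1 <= i <= n + 1)%N -> (dpos (L i) %/ 2 = dpos (L i.+1))%N.
  move=> h; have := Hch i h; rewrite /dsub lev ?lev; try lia.
  case/andP=> _ /eqP <-; rewrite (_ : (m i - m i.+1 = 1)%N) //; rewrite /m; lia.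
have chx i (x : nat) : (1 <= i <= n + 1)%N ->
    (x %/ 2 ^ (j - m i.+1) = x %/ 2 ^ (j - m i) %/ 2)%N.
  move=> h; rewrite (@anc_trans _ _ _ x (_ : m i.+1 <= m i <= j)%N); last by rewrite /m; lia.
  rewrite (_ : (m i - m i.+1 = 1)%N) //; rewrite /m; lia.
have F3 i i' (x : 'I_(2 ^ j)) : (1 <= i <= i')%N -> (i' <= n + 2)%N ->
    dsub (dyD x) (L i) -> dsub (dyD x) (L i').
  move=> h1 h2; elim: i' h1 h2 => [|i' IH] h1 h2; first lia.
  case: (eqVneq i i'.+1) => [->//|ne] H. have := IH ltac:(lia) ltac:(lia) H.
  rewrite (inL i') ?(inL i'.+1); try lia.
  move/eqP => E; apply/eqP; rewrite chx; last lia. rewrite E chl //; lia.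
have F2 i : (1 <= i <= n + 1)%N ->
   ~~ dsub (dyD (J i)) (L i) /\ dsub (dyD (J i)) (L i.+1).
  move=> h; have /andP [_ /eqP E] := HJ i h.
  rewrite /dbrother /= lev in E; last lia.
  split.
    rewrite inL; last lia. rewrite E. apply/negP => /eqP; case: ifP => Ho; have := odd_double_half (dpos (L i)); rewrite Ho -divn2 -muln2; lia.
  rewrite inL; last lia. rewrite chx // E -chl //. apply/eqP; case: ifP => Ho; have := odd_double_half (dpos (L i)); rewrite Ho -divn2 -muln2; lia.
have P1 t i' : (1 <= i' <= n + 2)%N -> dsub (dyD (I t)) (L i').
  by move=> h; apply: (F3 1%N) => //; lia.
have P2 i i' : (1 <= i)%N -> (i < i' <= n + 2)%N -> dsub (dyD (J i)) (L i').
  move=> h1 h2; apply: (F3 i.+1); try lia. by case: (F2 i ltac:(lia)).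
have P3 i i' : (1 <= i' <= i)%N -> (i <= n + 1)%N -> ~~ dsub (dyD (J i)) (L i').
  move=> h1 h2; apply/negP => H; have := F3 i' i (J i) ltac:(lia) ltac:(lia) H.
  by case: (F2 i ltac:(lia)) => /negP.
split => // K i1 i2 t hK h1 h2.
have m1 : (m i2 = (m i2.+1).+1 /\ m i2 <= j)%N by rewrite /m; lia.
have A1 := P2 i1 i2 h1 ltac:(lia).
have A2 := P3 i2 i2 ltac:(lia) ltac:(lia).
rewrite (inL i2) in A1; last lia.
rewrite (inL i2) in A2; last lia.
have B1 := P1 t i2.+1 ltac:(lia).
have B2 := P2 i2 i2.+1 ltac:(lia) ltac:(lia).
rewrite (inL i2.+1) in B1; last lia.
rewrite (inL i2.+1) in B2; last lia.
move: A1 A2 B1 B2 m1; move: (m i2) (m i2.+1) => M M1 A1 A2 B1 B2 [eM Mj].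
rewrite /dsub /= hK /= => /eqP E1 /eqP E2; apply/eqP.
case: (leqP (dlev K) M1) => hm.
  rewrite -E2 (@anc_trans _ _ _ (I t) (_ : dlev K <= M1 <= j)%N); last by clear -hm eM Mj hK; apply/andP; split; lia.
  rewrite (@anc_trans _ _ _ (J i2) (_ : dlev K <= M1 <= j)%N); last by clear -hm eM Mj hK; apply/andP; split; lia.
  by rewrite (eqP B1) (eqP B2).
exfalso; move/negP: A2; apply; rewrite -(eqP A1).
rewrite (@anc_trans _ _ _ (J i1) (_ : M <= dlev K <= j)%N); last by clear -hm eM Mj hK; apply/andP; split; lia.
rewrite (@anc_trans _ _ _ (J i2) (_ : M <= dlev K <= j)%N); last by clear -hm eM Mj hK; apply/andP; split; lia.
by rewrite E1 E2.
Qed.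



Lemma col_in (j d : nat) (A : {set 'I_(2 ^ j)}) (X : {ffun 'I_d -> {set 'I_(2 ^ j)}}) x :
  colouring A X -> x \in A -> exists i, x \in X i.
Proof. by move=> [_ U]; rewrite -U => /bigcupP [i _ h]; exists i. Qed.

Lemma col_sub (j d : nat) (A : {set 'I_(2 ^ j)}) (X : {ffun 'I_d -> {set 'I_(2 ^ j)}}) i :
  colouring A X -> X i \subset A.
Proof. by move=> [_ <-]; apply: (bigcup_sup i). Qed.

Lemma col_uniq (j d : nat) (A : {set 'I_(2 ^ j)}) (X : {ffun 'I_d -> {set 'I_(2 ^ j)}}) x i i' :
  colouring A X -> x \in X i -> x \in X i' -> i = i'.
Proof.
move=> [D _] h h'; case: (eqVneq i i') => // ne.
by have := D i i' ne; move/disjointFr => /(_ _ h); rewrite h'.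
Qed.

Lemma ext_struct (j d : nat) (A : {set 'I_(2 ^ j)}) z (X Y : {ffun 'I_d -> {set 'I_(2 ^ j)}}) :
  colouring A X -> colouring (A :|: [set z]) Y -> extends X Y ->
  exists col, forall i, Y i = if i == col then X i :|: [set z] else X i.
Proof.
move=> cX cY ext.
have [col zc] : exists col, z \in Y col by apply: (col_in cY); rewrite !inE eqxx orbT.
exists col => i; apply/setP => y; apply/idP/idP; first move=> yY.
  have := subsetP (col_sub i cY) y yY; rewrite !inE => /orP [yA|/eqP yz].
    have [i' yX] := col_in cX yA.
    have -> : i = i' by apply: (col_uniq cY yY); exact: (subsetP (ext i')).
    by case: ifP => _; rewrite ?inE yX.
  subst y; rewrite (col_uniq cY yY zc) eqxx !inE eqxx orbT //.
case: ifP => [/eqP -> | _]; last exact: (subsetP (ext i)).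
by rewrite !inE => /orP [h|/eqP ->//]; exact: (subsetP (ext col)).
Qed.

Lemma hom_perm (j d : nat) (eta : rat) (A : {set 'I_(2 ^ j)}) (E : {ffun 'I_d -> {set 'I_(2 ^ j)}})
  (s : {perm 'I_d}) : homogeneous eta A E -> homogeneous eta A [ffun i => E (s i)].
Proof.
move=> [[D U] H]; split; first split.
- move=> i i' ne; rewrite !ffunE; apply: D.
  by apply: contra ne => /eqP /perm_inj ->.
- rewrite -U; apply/setP => y; apply/bigcupP/bigcupP => [[i _]|[i _]].
    by rewrite ffunE => h; exists (s i).
  by move=> h; exists (s^-1 i)%g => //; rewrite ffunE permKV.
- move=> K vK lK; case: (H K vK lK) => [[h1 h2]|[h1 h2]]; [left|right]; split => //.
    by move=> i i'; rewrite !ffunE.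
  by move=> i; rewrite ffunE.
Qed.

Lemma hom_le1 (j d : nat) (eta : rat) (A : {set 'I_(2 ^ j)}) (X : {ffun 'I_d -> {set 'I_(2 ^ j)}}) K :
  homogeneous eta A X -> dvalid K -> (dlev K <= j)%N -> (#|restr A K| <= d)%N ->
  forall i, (#|restr (X i) K| <= 1)%N.
Proof.
move=> [_ H] vK lK c; case: (H K vK lK) => [[h _]|[_ h]] //.
by move: h; rewrite ltnNge c.
Qed.

Lemma restr_top (j : nat) (A : {set 'I_(2 ^ j)}) : restr A (Dyad 0 0) = A.
Proof.
apply/setP => x; rewrite !inE /dsub /= subn0 divn_small ?eqxx ?andbT //.
Qed.

Lemma restrU (j : nat) (A B : {set 'I_(2 ^ j)}) K : restr (A :|: B) K = restr A K :|: restr B K.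
Proof. by apply/setP => x; rewrite !inE andb_orl. Qed.

Lemma restr_sub (j : nat) (A : {set 'I_(2 ^ j)}) K : restr A K \subset A.
Proof. by apply/subsetP => x; rewrite inE => /andP []. Qed.

Lemma le1eq (T : finType) (A : {set T}) x y : (#|A| <= 1)%N -> x \in A -> y \in A -> x = y.
Proof.
move=> h hx hy; have := card_le1P h x hx y; rewrite hy inE => /esym/eqP //.
Qed.


Lemma rq (n x y : nat) : (1 <= x <= n)%N -> (1 <= y)%N -> (n%:R)^-1 * x%:R <= y%:R :> rat.
Proof.
move=> /andP [h1 h2] hy.
have n0 : (0 < n)%N by apply: leq_trans h2.
apply: (@le_trans _ _ 1).
  rewrite mulrC ler_pdivrMr ?ltr0n // mul1r ler_nat //.
by rewrite ler1n.
Qed.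
Lemma rq2 (n : nat) : (0 < n)%N -> ~ ((n%:R)^-1 * (n.+1)%:R <= 1 :> rat).
Proof. by move=> n0; rewrite mulrC ler_pdivrMr ?ltr0n // mul1r ler_nat ltnn. Qed.

Unset Implicit Arguments.
Theorem proposition3p1 (a n j : nat) (L : nat -> dyad)
    (I : 'I_(2 ^ a).-1 -> 'I_(2 ^ j)) (J : nat -> 'I_(2 ^ j)) :
  (0 < a)%N -> (0 < n)%N -> (n + a + 1 <= j)%N ->
  (forall i, (1 <= i <= n + 2)%N -> dvalid (L i) /\ dlev (L i) = (j + 1 - a - i)%N) ->
  (forall i, (1 <= i <= n + 1)%N -> dsub (L i) (L i.+1)) ->
  injective I ->
  (forall i, dsub (dyD (I i)) (L 1%N)) ->
  (forall i, (1 <= i <= n + 1)%N -> dsub (dyD (J i)) (dbrother (L i))) ->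
  let eta : rat := (n%:R)^-1 in
  let Cs : nat -> {set 'I_(2 ^ j)} := fun k =>
    [set I i | i : 'I_(2 ^ a).-1] :|:
    [set x | [exists i : 'I_(n + 2), (n - k + 1 <= i)%N && (x == J i)]] in
  (forall k, (k < n)%N -> Cs k \subset Cs k.+1) /\
  (* (A) *)
  (exists X : {ffun 'I_(2 ^ a) -> {set 'I_(2 ^ j)}},
     homogeneous eta (Cs 0%N) X /\
     forall Y : {ffun 'I_(2 ^ a) -> {set 'I_(2 ^ j)}},
       homogeneous eta (Cs 0%N) Y ->
       exists s : {perm 'I_(2 ^ a)}, forall i, Y i = X (s i)) /\
  (* (B) *)
  (forall k, (1 <= k <= n - 1)%N ->
     forall X : {ffun 'I_(2 ^ a) -> {set 'I_(2 ^ j)}},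
       stage eta Cs (k - 1) X ->
       exists! Y : {ffun 'I_(2 ^ a) -> {set 'I_(2 ^ j)}},
         homogeneous eta (Cs k) Y /\ extends X Y) /\
  (* (C) *)
  (forall X : {ffun 'I_(2 ^ a) -> {set 'I_(2 ^ j)}},
     stage eta Cs (n - 1) X ->
     ~ exists Y : {ffun 'I_(2 ^ a) -> {set 'I_(2 ^ j)}},
         homogeneous eta (Cs n) Y /\ extends X Y).
Proof.
move=> a0 n0 hj HL Hch Iinj HI HJ eta Cs.
have [P1 P2 P3 PK] := geom a0 n0 hj HL Hch HI HJ.
have d2 : (2 <= 2 ^ a)%N by rewrite -{1}(expn1 2) leq_exp2l.
have dd : ((2 ^ a).-1 + 1 = 2 ^ a)%N by rewrite addn1 prednK // expn_gt0.
pose IS := [set I i | i : 'I_(2 ^ a).-1].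
pose JS k := [set x | [exists i : 'I_(n + 2), (n - k + 1 <= i)%N && (x == J i)]].
have CsE k : Cs k = IS :|: JS k by [].
have JSP k x : reflect (exists i, (n - k + 1 <= i <= n + 1)%N /\ x = J i) (x \in JS k).
  rewrite inE; apply: (iffP existsP) => [[i /andP [h /eqP ->]]|[i [h ->]]].
    by exists i; split => //; have := ltn_ord i; lia.
  have hi : (i < n + 2)%N by lia.
  by exists (Ordinal hi); rewrite /= eqxx andbT; lia.
have Jinj i1 i2 : (1 <= i1 <= n + 1)%N -> (1 <= i2 <= n + 1)%N -> J i1 = J i2 -> i1 = i2.
  wlog le : i1 i2 / (i1 <= i2)%N.
    move=> W h1 h2 E; case: (leqP i1 i2) => h; first exact: W.
    by apply/esym; apply: W => //; lia.
  move=> h1 h2 E.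
  case: (ltngtP i1 i2) le => // lt _.
  have := P2 i1 i2 ltac:(lia) ltac:(lia); rewrite E => h.
  by have := P3 i2 i2 ltac:(lia) ltac:(lia); rewrite h.
have JnotI i t : (1 <= i <= n + 1)%N -> J i != I t.
  move=> h; apply/eqP => E.
  by have := P3 i 1%N ltac:(lia) ltac:(lia); rewrite E HI.
have JSnotIS k x : (k <= n)%N -> x \in JS k -> x \notin IS.
  move=> kn /JSP [i [h ->]]; apply/imsetP => [[t _ E]].
  by move/eqP: (JnotI i t ltac:(lia)).
have cardIS : #|IS| = (2 ^ a).-1 by rewrite card_imset // card_ord.
have cardJS k : (k <= n)%N -> #|JS k| = k.+1.
  move=> kn.
  have -> : JS k = [set J (n - k + 1 + nat_of_ord u)%N | u : 'I_k.+1].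
    apply/setP => x; apply/JSP/imsetP => [[i [h ->]]|[u _ ->]].
      have hu : (i - (n - k + 1) < k.+1)%N by lia.
      by exists (Ordinal hu) => //=; congr J; lia.
    by exists (n - k + 1 + nat_of_ord u)%N; split => //; have := ltn_ord u; lia.
  rewrite card_imset ?card_ord // => u v /Jinj E; apply: ord_inj; move: E.
  have := ltn_ord u; have := ltn_ord v => hu hv E; have := E ltac:(lia) ltac:(lia); lia.
have JS0 : JS 0%N = [set J (n + 1)%N].
  apply/setP => x; rewrite inE; apply/JSP/eqP => [[i [h ->]]|->].
    by congr J; lia.
  by exists (n + 1)%N; split => //; lia.
have JS_step k : (k < n)%N -> JS k.+1 = JS k :|: [set J (n - k)%N].
  move=> kn; apply/setP => x; rewrite in_setU in_set1; apply/JSP/orP => [[i [h ->]]|[/JSP [i [h ->]]|/eqP ->]].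
  - case: (eqVneq i (n - k)%N) => [->|ne]; first by right.
    by left; apply/JSP; exists i; split => //; lia.
  - by exists i; split => //; lia.
  - by exists (n - k)%N; split => //; lia.
have JS_mono k k' : (k <= k')%N -> JS k \subset JS k'.
  move=> le; apply/subsetP => x /JSP [i [h ->]]; apply/JSP; exists i; split => //; lia.
pose I' (t : nat) : 'I_(2 ^ j) := oapp I (J 0%N) (insub t : option 'I_(2 ^ a).-1).
have I'E (t : 'I_(2 ^ a).-1) : I' t = I t by rewrite /I' valK.
have I'small (i : 'I_(2 ^ a)) : (i < (2 ^ a).-1)%N -> exists t : 'I_(2 ^ a).-1, I' i = I t /\ nat_of_ord t = i.
  by move=> h; exists (Ordinal h); rewrite /I' insubT.
have I'IS (i : 'I_(2 ^ a)) : (i < (2 ^ a).-1)%N -> I' i \in IS.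
  by move=> /I'small [t [-> _]]; apply: imset_f.
have I'inj (i i' : 'I_(2 ^ a)) : (i < (2 ^ a).-1)%N -> (i' < (2 ^ a).-1)%N -> I' i = I' i' -> i = i'.
  move=> /I'small [t [-> e]] /I'small [t' [-> e']] /Iinj E; apply: ord_inj.
  by rewrite -e -e' E.
have bigu (i i' : 'I_(2 ^ a)) : ~~ (i < (2 ^ a).-1)%N -> ~~ (i' < (2 ^ a).-1)%N -> i = i'.
  move=> h h'; apply: ord_inj; have := ltn_ord i; have := ltn_ord i'; lia.
have lastP : ((2 ^ a).-1 < 2 ^ a)%N by rewrite ltn_predL expn_gt0.
pose lastc : 'I_(2 ^ a) := Ordinal lastP.
have firstP : (0 < 2 ^ a)%N by rewrite expn_gt0.
pose firstc : 'I_(2 ^ a) := Ordinal firstP.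
pose Ek k : {ffun 'I_(2 ^ a) -> {set 'I_(2 ^ j)}} :=
  [ffun i : 'I_(2 ^ a) => if (i < (2 ^ a).-1)%N then [set I' i] else JS k].
have Ecol k : (k <= n)%N -> colouring (Cs k) (Ek k).
  move=> kn; split.
  - move=> i i' ne; rewrite !ffunE.
    case: ifP => hi; case: ifP => hi'.
    + rewrite disjoints1 inE; apply/negP => /eqP E; move/eqP: ne; apply.
      exact: I'inj.
    + rewrite disjoints1; apply/negP => h; have := JSnotIS k _ kn h; by rewrite I'IS.
    + rewrite disjoint_sym disjoints1; apply/negP => h; have := JSnotIS k _ kn h; by rewrite I'IS.
    + by case/negP: ne; apply/eqP; apply: bigu; rewrite ?hi ?hi'.
  - apply/setP => x; rewrite CsE; apply/bigcupP/setUP => [[i _]|[]].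
    + rewrite ffunE; case: ifP => hi; last by right.
      by rewrite inE => /eqP ->; left; exact: I'IS.
    + case/imsetP => t _ ->; exists (widen_ord (leq_pred _) t) => //.
      by rewrite ffunE /= ltn_ord I'E inE eqxx.
    + by move=> xJ; exists lastc => //; rewrite ffunE /= ltnn.
have HEk k : (k < n)%N -> homogeneous eta (Cs k) (Ek k).
  move=> kn; split; first exact: Ecol (ltnW kn).
  move=> K vK lK.
  pose R := restr (JS k) K.
  have RE : restr (Cs k) K = restr IS K :|: R by rewrite CsE restrU.
  have cR : (#|R| <= k.+1)%N.
    by rewrite -(cardJS k (ltnW kn)); apply: subset_leq_card; apply: restr_sub.
  case: (leqP #|R| 1) => hR.
  - right; split.
    + rewrite RE; have := cardsUI (restr IS K) R.
      have := subset_leq_card (restr_sub IS K); rewrite cardIS; lia.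
    + move=> i; rewrite ffunE; case: ifP => _ //.
      by apply: leq_trans (subset_leq_card (restr_sub _ _)) _; rewrite cards1.
  - left. have hR' := hR.
    case/card_gt1P: hR => x [y [xR yR xy]].
    move: xR yR => /setIdP [xJ K1] /setIdP [yJ K2].
    case/JSP: xJ => i1 [h1 ex]; case/JSP: yJ => i2 [h2 ey]; subst x y.
    have allI t : dsub (dyD (I t)) K.
      case: (ltngtP i1 i2) => lt.
      + by apply: (PK K i1 i2 t lK) => //; lia.
      + by apply: (PK K i2 i1 t lK) => //; lia.
      + by subst; rewrite eqxx in xy.
    have rIS : restr IS K = IS.
      apply/setP => x; rewrite inE; apply/andb_idr => /imsetP [t _ ->]; exact: allI.
    split.
    + rewrite RE rIS; have := cardsUI IS R.
      have -> : IS :&: R = set0.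
        apply/eqP; rewrite -subset0; apply/subsetP => x.
        rewrite in_setI => /andP [xI /setIdP [xJ _]].
        by rewrite (negbTE (JSnotIS k x (ltnW kn) xJ)) in xI.
      rewrite cards0 cardIS; rewrite addn0 => ->; rewrite -{1}dd ltn_add2l; exact: hR'.
    + have fi i : (1 <= #|restr (Ek k i) K| <= n)%N.
        rewrite ffunE; case: ifP => hi; last by rewrite -/R; lia.
        have -> : restr [set I' i] K = [set I' i].
          apply/setP => y; rewrite inE; apply/andb_idr; rewrite inE => /eqP ->.
          by have [t [-> _]] := I'small i hi; apply: allI.
        by rewrite cards1 /= n0.
      move=> i i'; apply: rq; [exact: fi | have := fi i'; lia].
have St0 (X : {ffun 'I_(2 ^ a) -> {set 'I_(2 ^ j)}}) : homogeneous eta (Cs 0%N) X ->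
    exists s : {perm 'I_(2 ^ a)}, forall i, X i = Ek 0%N (s i).
  move=> hX.
  pose e (i : 'I_(2 ^ a)) := if (i < (2 ^ a).-1)%N then I' i else J (n + 1)%N.
  have Ee i : Ek 0%N i = [set e i] by rewrite ffunE /e JS0; case: ifP.
  have einj : injective e.
    move=> i i'; rewrite /e; case: ifP => hi; case: ifP => hi'.
    - exact: I'inj.
    - move=> E; have [t [E' _]] := I'small i hi.
      by move: (JnotI (n + 1)%N t ltac:(lia)); rewrite -E' E eqxx.
    - move=> E; have [t [E' _]] := I'small i' hi'.
      by move: (JnotI (n + 1)%N t ltac:(lia)); rewrite -E' E eqxx.
    - by move=> _; apply: bigu; rewrite ?hi ?hi'.
  have eC i : e i \in Cs 0%N.
    have [_ U] := Ecol 0%N (leq0n n); rewrite -U; apply/bigcupP; exists i => //.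
    by rewrite Ee set11.
  have cC : (#|Cs 0%N| <= 2 ^ a)%N.
    rewrite CsE JS0; have := cardsUI IS [set J (n + 1)%N]; rewrite cards1 cardIS dd => E; apply: leq_trans (leq_addr #|IS :&: [set J (n + 1)%N]| _) _; by rewrite E.
  have le1 c : (#|X c| <= 1)%N.
    by have := hom_le1 hX (K := Dyad 0 0) isT (leq0n j); rewrite restr_top => /(_ cC c); rewrite restr_top.
  have exc i : exists c, e i \in X c := col_in hX.1 (eC i).
  pose g i := odflt i [pick c | e i \in X c].
  have gP i : e i \in X (g i).
    rewrite /g; case: pickP => [c ->//|h]; have [c hc] := exc i; by rewrite h in hc.
  have ginj : injective g.
    move=> i i' E; apply: einj; have := gP i; have := gP i'; rewrite -E => h' h.
    exact: (le1eq (le1 (g i)) h h').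
  have Xg i : X (g i) = [set e i].
    apply/setP => y; rewrite inE; apply/idP/eqP => [hy|->]; last exact: gP.
    exact: (le1eq (le1 _) hy (gP i)).
  exists (perm ginj)^-1%g => c.
  by rewrite -{1}(permKV (perm ginj) c) permE Xg Ee.
have Step k (s : {perm 'I_(2 ^ a)}) (Y X : {ffun 'I_(2 ^ a) -> {set 'I_(2 ^ j)}}) :
    (k < n)%N -> (forall i, Y i = Ek k (s i)) -> homogeneous eta (Cs k.+1) X ->
    extends Y X -> forall i, X i = Ek k.+1 (s i).
  move=> kn hY hX ext.
  have Yd : Y = [ffun i => Ek k (s i)] by apply/ffunP => i; rewrite ffunE hY.
  have cY : colouring (Cs k) Y by rewrite Yd; exact: (hom_perm s (HEk k kn)).1.
  have CsS : Cs k.+1 = Cs k :|: [set J (n - k)%N] by rewrite !CsE JS_step // setUA.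
  have cX := hX.1; rewrite CsS in cX.
  have [col hc] := ext_struct cY cX ext.
  have Kc : (1 <= n - k + 1 <= n + 2)%N by lia.
  have [vK lvK] := HL _ Kc.
  have lK : (dlev (L (n - k + 1)%N) <= j)%N by rewrite lvK; lia.
  have big_col : ~~ (s col < (2 ^ a).-1)%N.
    apply/negP => hs.
    have le : (#|restr (Cs k.+1) (L (n - k + 1)%N)| <= 2 ^ a)%N.
      have sub : restr (Cs k.+1) (L (n - k + 1)%N) \subset IS :|: [set J (n - k)%N].
        apply/subsetP => x /setIdP [xC xK]; rewrite CsE in_setU in xC.
        case/orP: xC => [xI|/JSP [i [hi ex]]]; first by rewrite in_setU xI.
        subst x; rewrite in_setU in_set1; apply/orP; right; apply/eqP; congr J.
        case: (leqP i (n - k)) => hi2; first lia.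
        by move: xK; rewrite (negbTE (P3 i (n - k + 1)%N _ _)) //; lia.
      apply: leq_trans (subset_leq_card sub) _.
      have := cardsUI IS [set J (n - k)%N]; rewrite cards1 cardIS dd => E; apply: leq_trans (leq_addr #|IS :&: [set J (n - k)%N]| _) _; by rewrite E.
    have := hom_le1 hX vK lK le col.
    rewrite hc eqxx hY ffunE hs restrU.
    have [t [et _]] := I'small _ hs.
    apply/negP; rewrite -ltnNge; apply/card_gt1P.
    exists (I' (s col)), (J (n - k)%N); split.
    - rewrite in_setU; apply/orP; left; rewrite !inE eqxx /= et; apply: P1; lia.
    - rewrite in_setU; apply/orP; right; rewrite !inE eqxx /=; apply: P2; lia.
    - by rewrite et eq_sym; apply: JnotI; lia.
  move=> i; rewrite hc; case: eqVneq => [->|ne].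
  - by rewrite hY !ffunE (negbTE big_col) JS_step.
  - rewrite hY !ffunE.
    have hs : (s i < (2 ^ a).-1)%N.
      apply/negPn/negP => h; move/eqP: ne; apply; apply: (@perm_inj _ s).
      exact: bigu.
    by rewrite hs.
have Inv k : (k < n)%N -> forall X, stage eta Cs k X ->
    exists s : {perm 'I_(2 ^ a)}, forall i, X i = Ek k (s i).
  elim: k => [_ X /= hX| k IH kn X /= [hX [Y [stY ext]]]]; first exact: St0.
  have [s hs] := IH (ltnW kn) Y stY.
  by exists s; exact: (Step k s Y X (ltnW kn) hs hX ext).
split.
  move=> k kn; rewrite !CsE; apply: setUS; apply: JS_mono; lia.
split.
  exists (Ek 0%N); split; first exact: HEk 0%N n0.
  by move=> Y hY; have [s hs] := St0 Y hY; exists s.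
split.
  move=> k hk X stX; have [s hs] := Inv (k - 1)%N ltac:(lia) X stX.
  exists [ffun i => Ek k (s i)]; split.
    split; first exact: (hom_perm s (HEk k ltac:(lia))).
    move=> i; rewrite hs !ffunE; case: ifP => _ //; apply: JS_mono; lia.
  move=> Y' [hY' ext]; apply/ffunP => i; rewrite ffunE.
  have := Step (k - 1)%N s X Y' ltac:(lia) hs.
  rewrite (_ : (k - 1).+1 = k)%N; last lia.
  by move=> /(_ hY' ext i) ->.
move=> X stX [Y [hY ext]]; have [s hs] := Inv (n - 1)%N ltac:(lia) X stX.
have := Step (n - 1)%N s X Y ltac:(lia) hs.
rewrite (_ : (n - 1).+1 = n)%N; last lia.
move=> /(_ hY ext) hY'.
have c1 := hY' (s^-1 lastc)%g; rewrite permKV ffunE /= ltnn in c1.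
have f0 : (0 < (2 ^ a).-1)%N by lia.
have c2 := hY' (s^-1 firstc)%g; rewrite permKV ffunE /= f0 in c2.
case: hY => _ /(_ (Dyad 0 0) isT (leq0n j)); rewrite !restr_top => [[[_ H]|[_ H]]].
- have := H (s^-1 lastc)%g (s^-1 firstc)%g; rewrite !restr_top c1 c2 cards1 cardJS // mulr1n.
  exact: rq2.
- by have := H (s^-1 lastc)%g; rewrite restr_top c1 cardJS //; lia.
Qed.
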